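(* Let $b_0:[t_0,T]\to\mathbb{R}$ and $b=(b_1,b_2,b_3):[t_0,T]\to\mathbb{R}^3$ be continuous and $H(t)=b_0(t)\mathbb{I}+b(t)\cdot\sigma$. Let $q(t)=(u_0(t),\tilde u_1(t),\tilde u_2(t),\tilde u_3(t))$ be the solution of the linear Cauchy problem $\dot q'(t)=A(t)q'(t)$, $q(t_0)=(1,0,0,0)$, where $q'$ is the column vector of $q$ and $$A(t)=\begin{pmatrix}0&b_1&b_2&b_3\\-b_1&0&-b_3&b_2\\-b_2&b_3&0&-b_1\\-b_3&-b_2&b_1&0\end{pmatrix}(t),$$ equivalently $\dot u_0=b\cdot\tilde u$, $\dot{\tilde u}=-u_0 b+b\times\tilde u$. Then $q(t)$ is real with $u_0(t)^2+\|\tilde u(t)\|^2=1$ for all $t$, and $$U_H(t,t_0)=\exp\Bigl\{-i\int_{t_0}^tb_0(\tau)d\tau\Bigr\}\bigl(u_0(t)\,\mathbb{I}+i\,\tilde u(t)\cdot\sigma\bigr),\qquad t\in[t_0,T].$$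
   Context: $\sigma=(\sigma_1,\sigma_2,\sigma_3)$ are the Pauli matrices $\sigma_1=\begin{pmatrix}0&1\\1&0\end{pmatrix}$, $\sigma_2=\begin{pmatrix}0&-i\\i&0\end{pmatrix}$, $\sigma_3=\begin{pmatrix}1&0\\0&-1\end{pmatrix}$; $v\cdot\sigma=\sum_jv_j\sigma_j$; $\times$ is the vector product on $\mathbb{R}^3$. $U_H(t,t_0)$ is the solution of $i\frac{d}{dt}U_H(t,t_0)=H(t)U_H(t,t_0)$, $U_H(t_0,t_0)=\mathbb{I}$ on $\mathbb{C}^2$. *)

(* Defs.v *)
From Stdlib Require Import Reals.
From Coquelicot Require Import Coquelicot.
Open Scope R_scope.

Inductive idx2 := I1 | I2.

Definition M2 := idx2 -> idx2 -> C.

Definition mmul2 (A B : M2) : M2 :=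
  fun i j => (A i I1 * B I1 j + A i I2 * B I2 j)%C.

Definition madd2 (A B : M2) : M2 := fun i j => (A i j + B i j)%C.
Definition mscal2 (c : C) (A : M2) : M2 := fun i j => (c * A i j)%C.

Definition Id2 : M2 := fun i j =>
  match i, j with I1, I1 | I2, I2 => 1%C | _, _ => 0%C end.

Definition sigma1 : M2 := fun i j =>
  match i, j with I1, I2 | I2, I1 => 1%C | _, _ => 0%C end.
Definition sigma2 : M2 := fun i j =>
  match i, j with I1, I2 => (- Ci)%C | I2, I1 => Ci | _, _ => 0%C end.
Definition sigma3 : M2 := fun i j =>
  match i, j with I1, I1 => 1%C | I2, I2 => (-1)%C | _, _ => 0%C end.

Definition dot_sigma (v1 v2 v3 : C) : M2 :=
  madd2 (mscal2 v1 sigma1) (madd2 (mscal2 v2 sigma2) (mscal2 v3 sigma3)).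

Definition Ham (b0 b1 b2 b3 : R -> R) (t : R) : M2 :=
  madd2 (mscal2 (RtoC (b0 t)) Id2)
        (dot_sigma (RtoC (b1 t)) (RtoC (b2 t)) (RtoC (b3 t))).

Definition cexpi (theta : R) : C := (cos theta, sin theta).

Definition cont_within {V : UniformSpace} (t0 T : R) (f : R -> V) (x : R) : Prop :=
  filterlim f (within (fun s => t0 <= s <= T) (locally x)) (locally (f x)).

(* U solves  i dU/dt = H(t) U,  U(t0) = I  on [t0,T]:
   U is continuous on [t0,T] (relative topology), differentiable on (t0,T)
   with  dU/dt = -i H U  there, and U(t0) = I. *)
Definition is_propagator (H : R -> M2) (t0 T : R) (U : R -> M2) : Prop :=
  (forall t, t0 <= t <= T -> forall i j, cont_within t0 T (fun s => U s i j) t) /\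
  (forall t, t0 < t < T -> forall i j,
      is_derive (fun s => U s i j) t ((- Ci) * mmul2 (H t) (U t) i j)%C) /\
  (forall i j, U t0 i j = Id2 i j).

(* Main.v *)
Require Import Defs.
From Stdlib Require Import Reals Lra.
From Coquelicot Require Import Coquelicot.
Open Scope R_scope.

Definition clamp (a b s : R) := Rmax a (Rmin b s).

Lemma clamp_id a b s : a <= s <= b -> clamp a b s = s.
Proof. intros H; unfold clamp, Rmax, Rmin; repeat destruct Rle_dec; lra. Qed.

Lemma clamp_in a b s : a <= b -> a <= clamp a b s <= b.
Proof. intros H; unfold clamp, Rmax, Rmin; repeat destruct Rle_dec; lra. Qed.

Lemma clamp_lip a b s y : a <= b -> Rabs (clamp a b s - clamp a b y) <= Rabs (s - y).
Proof.
  intros H; unfold clamp, Rmax, Rmin; repeat destruct Rle_dec;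
  unfold Rabs; repeat destruct Rcase_abs; lra.
Qed.

Lemma clamp_cont a b y : a <= b -> continuous (clamp a b) y.
Proof.
  intros H. apply filterlim_locally. intros eps.
  exists eps. intros s Hs. 
  change (Rabs (clamp a b s - clamp a b y) < eps).
  eapply Rle_lt_trans. apply clamp_lip; auto. exact Hs.
Qed.

Lemma cw_clamp {V : UniformSpace} a b (f : R -> V) : a <= b ->
  (forall t, a <= t <= b -> cont_within a b f t) ->
  forall y, continuous (fun s => f (clamp a b s)) y.
Proof.
  intros Hab Hf y Q HQ.
  specialize (Hf (clamp a b y) (clamp_in a b y Hab) Q HQ).
  unfold within in Hf.
  pose proof (clamp_cont a b y Hab _ Hf) as H.
  simpl in H. unfold filtermap in H |- *.
  eapply filter_imp; [|exact H]. intros s Hs. apply Hs. apply clamp_in; auto.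
Qed.

Lemma cont_cw {V : UniformSpace} a b (f g : R -> V) :
  (forall y, continuous g y) -> (forall x, a <= x <= b -> f x = g x) ->
  forall t, a <= t <= b -> cont_within a b f t.
Proof.
  intros Hg Hfg t Ht Q HQ. rewrite (Hfg t Ht) in HQ.
  specialize (Hg t Q HQ). unfold filtermap in *. unfold within.
  eapply filter_imp; [|exact Hg]. intros s Hs Ps. rewrite Hfg; auto.
Qed.
Lemma contC_iff (f : R -> C) y :
  continuous f y <-> continuous (fun s => fst (f s)) y /\ continuous (fun s => snd (f s)) y.
Proof.
  unfold continuous. rewrite !filterlim_locally. split.
  - intros H; split; intros eps; (eapply filter_imp; [| exact (H eps)]); intros s [H1 H2]; assumption.
  - intros [H1 H2] eps. eapply filter_imp; [| exact (filter_and _ _ (H1 eps) (H2 eps))].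
    intros s [A B]. split; assumption.
Qed.

Lemma derC_iff (f : R -> C) t (l : C) :
  is_derive f t l <-> is_derive (fun s => fst (f s)) t (fst l) /\ is_derive (fun s => snd (f s)) t (snd l).
Proof.
  split.
  - intros H; split.
    + unfold is_derive in *. 
      eapply filterdiff_ext_lin.
      eapply (filterdiff_comp' f (fun p : C => fst p)). exact H.
      apply filterdiff_linear. apply (@is_linear_fst R_AbsRing R_NormedModule R_NormedModule).
      intros y; reflexivity.
    + unfold is_derive in *. 
      eapply filterdiff_ext_lin.
      eapply (filterdiff_comp' f (fun p : C => snd p)). exact H.
      apply filterdiff_linear. apply (@is_linear_snd R_AbsRing R_NormedModule R_NormedModule).
      intros y; reflexivity.
  - intros [H1 H2]. unfold is_derive in *.
    assert (Hp : @filterdiff R_AbsRing (prod_NormedModule R_AbsRing R_NormedModule R_NormedModule)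
                   (prod_NormedModule R_AbsRing R_NormedModule R_NormedModule)
                   (fun p => (fst p, snd p)) (locally (fst (f t), snd (f t))) (fun p => (fst p, snd p))).
    { apply filterdiff_linear. apply is_linear_prod; [apply is_linear_fst|apply is_linear_snd]. }
    pose proof (filterdiff_comp'_2 (fun s => fst (f s)) (fun s => snd (f s)) (fun a b => (a,b)) t _ _ (fun a b => (a,b)) H1 H2 Hp) as K.
    eapply filterdiff_ext_lin.
    eapply filterdiff_ext. 2: exact K.
    intros y; simpl. destruct (f y); reflexivity.
    intros y; simpl. destruct l; reflexivity.
Qed.

Lemma der_eqv {V : NormedModule R_AbsRing} (f : R -> V) t l l' :
  is_derive f t l -> l = l' -> is_derive f t l'.
Proof. intros H ->; exact H. Qed.

Lemma dR_plus (f g : R -> R) t a b : is_derive f t a -> is_derive g t b ->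
  is_derive (fun s => f s + g s) t (a + b).
Proof. intros; apply (is_derive_plus f g); auto. Qed.
Lemma dR_minus (f g : R -> R) t a b : is_derive f t a -> is_derive g t b ->
  is_derive (fun s => f s - g s) t (a - b).
Proof. intros; apply (is_derive_minus f g); auto. Qed.
Lemma dR_mult (f g : R -> R) t a b : is_derive f t a -> is_derive g t b ->
  is_derive (fun s => f s * g s) t (a * g t + f t * b).
Proof. intros; apply (is_derive_mult f g); auto. intros; apply Rmult_comm. Qed.
Lemma dR_const (c : R) t : is_derive (fun _ => c) t 0.
Proof. apply (is_derive_const c). Qed.

Lemma cR_plus (f g : R -> R) y : continuous f y -> continuous g y -> continuous (fun s => f s + g s) y.
Proof. intros; apply (continuous_plus f g); auto. Qed.
Lemma cR_minus (f g : R -> R) y : continuous f y -> continuous g y -> continuous (fun s => f s - g s) y.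
Proof. intros; apply (continuous_minus f g); auto. Qed.
Lemma cR_mult (f g : R -> R) y : continuous f y -> continuous g y -> continuous (fun s => f s * g s) y.
Proof. intros; apply (@continuous_mult _ R_AbsRing f g); auto. Qed.

Lemma dC_mult (f g : R -> C) t a b : is_derive f t a -> is_derive g t b ->
  is_derive (fun s => (f s * g s)%C) t (a * g t + f t * b)%C.
Proof.
  rewrite !derC_iff; intros [A1 A2] [B1 B2]; simpl; split.
  - eapply der_eqv. apply dR_minus; apply dR_mult; eauto. simpl; ring.
  - eapply der_eqv. apply dR_plus; apply dR_mult; eauto. simpl; ring.
Qed.
Lemma dC_plus (f g : R -> C) t a b : is_derive f t a -> is_derive g t b ->
  is_derive (fun s => (f s + g s)%C) t (a + b)%C.
Proof.
  rewrite !derC_iff; intros [A1 A2] [B1 B2]; simpl; split; apply dR_plus; auto.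
Qed.
Lemma dC_const (c : C) (t : R) : is_derive (fun _ : R => c) t (RtoC 0).
Proof. rewrite derC_iff; simpl; split; apply dR_const. Qed.

Lemma cC_mult (f g : R -> C) y : continuous f y -> continuous g y -> continuous (fun s => (f s * g s)%C) y.
Proof.
  rewrite !contC_iff; intros [A1 A2] [B1 B2]; simpl; split.
  - apply cR_minus; apply cR_mult; auto.
  - apply cR_plus; apply cR_mult; auto.
Qed.
Lemma cC_plus (f g : R -> C) y : continuous f y -> continuous g y -> continuous (fun s => (f s + g s)%C) y.
Proof.
  rewrite !contC_iff; intros [A1 A2] [B1 B2]; simpl; split; apply cR_plus; auto.
Qed.

Definition cw {V : UniformSpace} a b (f : R -> V) := forall t, a <= t <= b -> cont_within a b f t.

Lemma cw_iff {V : UniformSpace} a b (f : R -> V) : a <= b ->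
  (cw a b f <-> forall y, continuous (fun s => f (clamp a b s)) y).
Proof.
  intros Hab; split.
  - intros H; apply cw_clamp; auto.
  - intros H. unfold cw. apply (cont_cw a b f (fun s => f (clamp a b s))); auto.
    intros; rewrite clamp_id; auto.
Qed.

Lemma cwC_mult a b (f g : R -> C) : a <= b -> cw a b f -> cw a b g -> cw a b (fun s => (f s * g s)%C).
Proof. intros Hab; rewrite !cw_iff; auto. intros; apply cC_mult; auto. Qed.
Lemma cwC_plus a b (f g : R -> C) : a <= b -> cw a b f -> cw a b g -> cw a b (fun s => (f s + g s)%C).
Proof. intros Hab; rewrite !cw_iff; auto. intros; apply cC_plus; auto. Qed.
Lemma cwC_const a b (c : C) : a <= b -> cw a b (fun _ => c).
Proof. intros Hab; rewrite !cw_iff; auto. intros; apply continuous_const. Qed.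
Lemma cwR_minus a b (f g : R -> R) : a <= b -> cw a b f -> cw a b g -> cw a b (fun s => f s - g s).
Proof. intros Hab; rewrite !cw_iff; auto. intros; apply cR_minus; auto. Qed.

Lemma cwC_iff a b (f : R -> C) t :
  cont_within a b f t <-> cont_within a b (fun s => fst (f s)) t /\ cont_within a b (fun s => snd (f s)) t.
Proof.
  unfold cont_within. rewrite !filterlim_locally. split.
  - intros H; split; intros eps; (eapply filter_imp; [| exact (H eps)]); intros s [H1 H2]; assumption.
  - intros [H1 H2] eps. eapply filter_imp; [| exact (filter_and _ _ (H1 eps) (H2 eps))].
    intros s [A B]. split; assumption.
Qed.

Lemma cwC_iff' a b (f : R -> C) :
  cw a b f <-> cw a b (fun s => fst (f s)) /\ cw a b (fun s => snd (f s)).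
Proof.
  unfold cw; split.
  - intros H; split; intros t Ht; apply (proj1 (cwC_iff a b f t) (H t Ht)).
  - intros [H1 H2] t Ht; apply cwC_iff; auto.
Qed.

Lemma energy a b (x1 x2 x3 x4 d1 d2 d3 d4 : R -> R) :
  cw a b x1 -> cw a b x2 -> cw a b x3 -> cw a b x4 ->
  (forall t, a < t < b -> is_derive x1 t (d1 t)) ->
  (forall t, a < t < b -> is_derive x2 t (d2 t)) ->
  (forall t, a < t < b -> is_derive x3 t (d3 t)) ->
  (forall t, a < t < b -> is_derive x4 t (d4 t)) ->
  (forall t, a < t < b -> x1 t * d1 t + x2 t * d2 t + x3 t * d3 t + x4 t * d4 t = 0) ->
  forall t, a <= t <= b ->
  x1 t * x1 t + x2 t * x2 t + x3 t * x3 t + x4 t * x4 t =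
  x1 a * x1 a + x2 a * x2 a + x3 a * x3 a + x4 a * x4 a.
Proof.
  intros C1 C2 C3 C4 D1 D2 D3 D4 Hz t Ht.
  assert (Hab : a <= b) by lra.
  
  rewrite cw_iff in C1, C2, C3, C4; auto.
  
  set (G := fun s => x1 (clamp a b s) * x1 (clamp a b s) + x2 (clamp a b s) * x2 (clamp a b s)
                   + x3 (clamp a b s) * x3 (clamp a b s) + x4 (clamp a b s) * x4 (clamp a b s)).
  destruct (MVT_gen G a t (fun _ => 0)) as [c [_ Hc]].
  - intros x Hx. rewrite Rmin_left in Hx by lra. rewrite Rmax_right in Hx by lra.
    assert (Hx' : a < x < b) by lra.
    
    apply (is_derive_ext_loc (fun s => x1 s * x1 s + x2 s * x2 s + x3 s * x3 s + x4 s * x4 s)).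
    
    + assert (Hp : 0 < Rmin (x - a) (b - x)) by (apply Rmin_pos; lra).
      exists (mkposreal _ Hp). intros s Hs. change (Rabs (s - x) < Rmin (x - a) (b - x)) in Hs.
    
      assert (Hs' : a <= s <= b).
      { pose proof (Rmin_l (x-a) (b-x)); pose proof (Rmin_r (x-a) (b-x)).
        unfold Rabs in Hs; destruct Rcase_abs in Hs; lra. }
    
      unfold G; rewrite clamp_id; auto.
    +  eapply der_eqv.
      apply dR_plus; [apply dR_plus; [apply dR_plus|]|]; apply dR_mult; auto.
    
      specialize (Hz x Hx'). lra.
  - intros x _. apply (proj2 (continuity_pt_filterlim _ _)).
    change (continuous G x). unfold G. apply cR_plus; [apply cR_plus; [apply cR_plus|]|]; apply cR_mult; auto.
  - unfold G in Hc. rewrite !clamp_id in Hc by lra. lra.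
Qed.

Lemma loc_int a b x (P : R -> Prop) : a < x < b -> (forall s, a <= s <= b -> P s) -> locally x P.
Proof.
  intros Hx HP.
  assert (Hp : 0 < Rmin (x - a) (b - x)) by (apply Rmin_pos; lra).
  exists (mkposreal _ Hp). intros s Hs. change (Rabs (s - x) < Rmin (x - a) (b - x)) in Hs.
  apply HP. pose proof (Rmin_l (x-a) (b-x)); pose proof (Rmin_r (x-a) (b-x)).
  unfold Rabs in Hs; destruct Rcase_abs in Hs; lra.
Qed.

Lemma e_facts t0 T (b0 : R -> R) : t0 <= T -> cw t0 T b0 ->
  cw t0 T (fun s => cexpi (- RInt b0 t0 s)) /\
  forall t, t0 < t < T -> is_derive (fun s => cexpi (- RInt b0 t0 s)) t
     ((- sin (- RInt b0 t0 t) * - b0 t, cos (- RInt b0 t0 t) * - b0 t) : C).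
Proof.
  intros Hab Hb.
  set (f := fun x => b0 (clamp t0 T x)).
  assert (Hf : forall y, continuous f y) by (apply cw_clamp; auto).
  set (F := fun s => RInt f t0 s).
  assert (HF : forall y, is_derive F y (f y)).
  { intros y. apply (is_derive_RInt f F t0 y); auto.
    apply filter_forall; intros x. apply (@RInt_correct R_CompleteNormedModule). apply (@ex_RInt_continuous R_CompleteNormedModule); intros; apply Hf. }
  assert (HFe : forall s, t0 <= s <= T -> RInt b0 t0 s = F s).
  { intros s Hs. unfold F. apply RInt_ext. intros x Hx.
    rewrite Rmin_left in Hx by lra. rewrite Rmax_right in Hx by lra.
    unfold f; rewrite clamp_id; auto; lra. }
  assert (HE : forall y, is_derive (fun s => cexpi (- F s)) y
                 ((- sin (- F y) * - f y, cos (- F y) * - f y) : C)).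
  { intros y. apply derC_iff; unfold cexpi; simpl; split.
    - eapply der_eqv. apply (is_derive_comp cos (fun s => - F s)).
      apply is_derive_cos. apply (is_derive_opp F). apply HF.
      unfold scal, opp; simpl; unfold mult; simpl. ring.
    - eapply der_eqv. apply (is_derive_comp sin (fun s => - F s)).
      apply is_derive_sin. apply (is_derive_opp F). apply HF.
      unfold scal, opp; simpl; unfold mult; simpl. ring. }
  split.
  - unfold cw. apply (@cont_cw C_UniformSpace t0 T _ (fun s => cexpi (- F s))).
    + intros y. apply contC_iff. destruct (proj1 (derC_iff _ _ _) (HE y)) as [E1 E2].
      split; [exact (ex_derive_continuous _ _ (ex_intro _ _ E1)) | exact (ex_derive_continuous _ _ (ex_intro _ _ E2))].
    + intros; rewrite HFe; auto.
  - intros t Ht. apply (is_derive_ext_loc (fun s => cexpi (- F s))).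
    + apply (loc_int t0 T); auto. intros; rewrite HFe; auto.
    + eapply der_eqv. apply HE. rewrite HFe by lra. unfold f; rewrite clamp_id by lra. reflexivity.
Qed.

Ltac cwtac H := repeat match goal with
 | |- cw _ _ (fun s => Cmult (@?f s) (@?g s)) => apply (cwC_mult _ _ _ _ H)
 | |- cw _ _ (fun s => Cplus (@?f s) (@?g s)) => apply (cwC_plus _ _ _ _ H)
 | |- cw _ _ (fun _ => ?c) => apply (cwC_const _ _ c H)
 | |- cw _ _ _ => assumption
 end.

Ltac dtac := repeat match goal with
 | |- is_derive (fun s => Cmult (@?f s) (@?g s)) _ _ => eapply dC_mult
 | |- is_derive (fun s => Cplus (@?f s) (@?g s)) _ _ => eapply dC_plus
 | |- is_derive (fun _ => ?c) _ _ => apply dC_const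
 | |- is_derive _ _ _ => eassumption
 end.

Theorem theorem2 (t0 T : R) (b0 b1 b2 b3 : R -> R)
  (u0 u1 u2 u3 : R -> C)
  (Hb0 : forall t, t0 <= t <= T -> cont_within t0 T b0 t)
  (Hb1 : forall t, t0 <= t <= T -> cont_within t0 T b1 t)
  (Hb2 : forall t, t0 <= t <= T -> cont_within t0 T b2 t)
  (Hb3 : forall t, t0 <= t <= T -> cont_within t0 T b3 t)
  (Hqc : forall t, t0 <= t <= T ->
     cont_within t0 T u0 t /\ cont_within t0 T u1 t /\
     cont_within t0 T u2 t /\ cont_within t0 T u3 t)
  (Hq0 : forall t, t0 < t < T -> is_derive u0 t
     (RtoC (b1 t) * u1 t + RtoC (b2 t) * u2 t + RtoC (b3 t) * u3 t)%C)
  (Hq1 : forall t, t0 < t < T -> is_derive u1 t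
     (- RtoC (b1 t) * u0 t - RtoC (b3 t) * u2 t + RtoC (b2 t) * u3 t)%C)
  (Hq2 : forall t, t0 < t < T -> is_derive u2 t
     (- RtoC (b2 t) * u0 t + RtoC (b3 t) * u1 t - RtoC (b1 t) * u3 t)%C)
  (Hq3 : forall t, t0 < t < T -> is_derive u3 t
     (- RtoC (b3 t) * u0 t - RtoC (b2 t) * u1 t + RtoC (b1 t) * u2 t)%C)
  (Hinit : u0 t0 = 1%C /\ u1 t0 = 0%C /\ u2 t0 = 0%C /\ u3 t0 = 0%C) :
  let UF : R -> M2 := fun t =>
    mscal2 (cexpi (- RInt b0 t0 t))
      (madd2 (mscal2 (u0 t) Id2) (mscal2 Ci (dot_sigma (u1 t) (u2 t) (u3 t)))) in
  (forall t, t0 <= t <= T ->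
     Im (u0 t) = 0 /\ Im (u1 t) = 0 /\ Im (u2 t) = 0 /\ Im (u3 t) = 0 /\
     Cmod (u0 t) ^ 2 + Cmod (u1 t) ^ 2 + Cmod (u2 t) ^ 2 + Cmod (u3 t) ^ 2 = 1) /\
  is_propagator (Ham b0 b1 b2 b3) t0 T UF /\
  (forall U : R -> M2, is_propagator (Ham b0 b1 b2 b3) t0 T U ->
     forall t, t0 <= t <= T -> forall i j, U t i j = UF t i j).
Proof.
  intros UF.
  destruct Hinit as [In0 [In1 [In2 In3]]].
  assert (CU0 : cw t0 T u0) by (intros t Ht; apply (Hqc t Ht)).
  assert (CU1 : cw t0 T u1) by (intros t Ht; apply (Hqc t Ht)).
  assert (CU2 : cw t0 T u2) by (intros t Ht; apply (Hqc t Ht)).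
  assert (CU3 : cw t0 T u3) by (intros t Ht; apply (Hqc t Ht)).
  destruct (proj1 (cwC_iff' _ _ _) CU0) as [CP0 CQ0].
  destruct (proj1 (cwC_iff' _ _ _) CU1) as [CP1 CQ1].
  destruct (proj1 (cwC_iff' _ _ _) CU2) as [CP2 CQ2].
  destruct (proj1 (cwC_iff' _ _ _) CU3) as [CP3 CQ3].
  assert (P0 : forall t, t0 < t < T -> is_derive (fun s => fst (u0 s)) t
     (b1 t * fst (u1 t) + b2 t * fst (u2 t) + b3 t * fst (u3 t))).
  { intros t Ht. eapply der_eqv. apply (proj1 (proj1 (derC_iff _ _ _) (Hq0 t Ht))). simpl; ring. }
  assert (Q0 : forall t, t0 < t < T -> is_derive (fun s => snd (u0 s)) t
     (b1 t * snd (u1 t) + b2 t * snd (u2 t) + b3 t * snd (u3 t))).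
  { intros t Ht. eapply der_eqv. apply (proj2 (proj1 (derC_iff _ _ _) (Hq0 t Ht))). simpl; ring. }
  assert (P1 : forall t, t0 < t < T -> is_derive (fun s => fst (u1 s)) t
     (- b1 t * fst (u0 t) - b3 t * fst (u2 t) + b2 t * fst (u3 t))).
  { intros t Ht. eapply der_eqv. apply (proj1 (proj1 (derC_iff _ _ _) (Hq1 t Ht))). simpl; ring. }
  assert (Q1 : forall t, t0 < t < T -> is_derive (fun s => snd (u1 s)) t
     (- b1 t * snd (u0 t) - b3 t * snd (u2 t) + b2 t * snd (u3 t))).
  { intros t Ht. eapply der_eqv. apply (proj2 (proj1 (derC_iff _ _ _) (Hq1 t Ht))). simpl; ring. }
  assert (P2 : forall t, t0 < t < T -> is_derive (fun s => fst (u2 s)) t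
     (- b2 t * fst (u0 t) + b3 t * fst (u1 t) - b1 t * fst (u3 t))).
  { intros t Ht. eapply der_eqv. apply (proj1 (proj1 (derC_iff _ _ _) (Hq2 t Ht))). simpl; ring. }
  assert (Q2 : forall t, t0 < t < T -> is_derive (fun s => snd (u2 s)) t
     (- b2 t * snd (u0 t) + b3 t * snd (u1 t) - b1 t * snd (u3 t))).
  { intros t Ht. eapply der_eqv. apply (proj2 (proj1 (derC_iff _ _ _) (Hq2 t Ht))). simpl; ring. }
  assert (P3 : forall t, t0 < t < T -> is_derive (fun s => fst (u3 s)) t
     (- b3 t * fst (u0 t) - b2 t * fst (u1 t) + b1 t * fst (u2 t))).
  { intros t Ht. eapply der_eqv. apply (proj1 (proj1 (derC_iff _ _ _) (Hq3 t Ht))). simpl; ring. }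
  assert (Q3 : forall t, t0 < t < T -> is_derive (fun s => snd (u3 s)) t
     (- b3 t * snd (u0 t) - b2 t * snd (u1 t) + b1 t * snd (u2 t))).
  { intros t Ht. eapply der_eqv. apply (proj2 (proj1 (derC_iff _ _ _) (Hq3 t Ht))). simpl; ring. }
  assert (EQ : forall t, t0 <= t <= T ->
    snd (u0 t) * snd (u0 t) + snd (u1 t) * snd (u1 t) + snd (u2 t) * snd (u2 t) + snd (u3 t) * snd (u3 t) = 0).
  { intros t Ht.
    pose proof (energy t0 T _ _ _ _ _ _ _ _ CQ0 CQ1 CQ2 CQ3 Q0 Q1 Q2 Q3) as E.
    cbv beta in E. rewrite E; [| intros; ring | exact Ht].
    rewrite In0, In1, In2, In3; simpl; ring. }
  assert (EP : forall t, t0 <= t <= T ->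
    fst (u0 t) * fst (u0 t) + fst (u1 t) * fst (u1 t) + fst (u2 t) * fst (u2 t) + fst (u3 t) * fst (u3 t) = 1).
  { intros t Ht.
    pose proof (energy t0 T _ _ _ _ _ _ _ _ CP0 CP1 CP2 CP3 P0 P1 P2 P3) as E.
    cbv beta in E. rewrite E; [| intros; ring | exact Ht].
    rewrite In0, In1, In2, In3; simpl; ring. }
  split.
  { intros t Ht. specialize (EQ t Ht). specialize (EP t Ht).
    assert (snd (u0 t) = 0) by nra. assert (snd (u1 t) = 0) by nra.
    assert (snd (u2 t) = 0) by nra. assert (snd (u3 t) = 0) by nra.
    unfold Im. repeat split; auto.
    unfold Cmod. rewrite !pow2_sqrt by nra. simpl. nra. }
  assert (DUF : forall t, t0 < t < T -> forall i j,
    is_derive (fun s => UF s i j) t ((- Ci) * mmul2 (Ham b0 b1 b2 b3 t) (UF t) i j)%C).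
  { intros t Ht i j. assert (Hab : t0 <= T) by lra.
    destruct (e_facts t0 T b0 Hab Hb0) as [_ De]. specialize (De t Ht).
    pose proof (Hq0 t Ht) as D0. pose proof (Hq1 t Ht) as D1.
    pose proof (Hq2 t Ht) as D2. pose proof (Hq3 t Ht) as D3.
    destruct i, j; (eapply der_eqv; [cbv beta delta [UF mscal2 madd2 dot_sigma]; dtac | ]);
    unfold UF, Ham, mmul2, mscal2, madd2, dot_sigma, Id2, sigma1, sigma2, sigma3, cexpi;
    apply injective_projections; simpl; ring. }
  assert (CUF : t0 <= T -> forall i j, cw t0 T (fun s => UF s i j)).
  { intros Hab i j. destruct (e_facts t0 T b0 Hab Hb0) as [Ce _].
    destruct i, j; cbv beta delta [UF mscal2 madd2 dot_sigma]; cwtac Hab. }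
  assert (IUF : forall i j, UF t0 i j = Id2 i j).
  { assert (R0 : RInt b0 t0 t0 = 0) by exact (RInt_point _ _).
    intros i j; unfold UF; rewrite R0, Ropp_0, In0, In1, In2, In3; unfold cexpi; rewrite cos_0, sin_0.
    destruct i, j; unfold mscal2, madd2, dot_sigma, Id2, sigma1, sigma2, sigma3;
    apply injective_projections; simpl; ring. }
  split.
  { split; [|split].
    - intros t Ht i j. apply (CUF ltac:(lra)); auto.
    - exact DUF.
    - exact IUF. }
  intros U [UC [UD U0]] t Ht i j.
  assert (Hab : t0 <= T) by lra.
  assert (CU : forall i j, cw t0 T (fun s => U s i j)) by (intros i' j' t' Ht'; apply UC; auto).
  destruct (proj1 (cwC_iff' _ _ _) (CU I1 j)) as [C1 C2].
  destruct (proj1 (cwC_iff' _ _ _) (CU I2 j)) as [C3 C4].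
  destruct (proj1 (cwC_iff' _ _ _) (CUF Hab I1 j)) as [C1' C2'].
  destruct (proj1 (cwC_iff' _ _ _) (CUF Hab I2 j)) as [C3' C4'].
  pose proof (energy t0 T
    (fun s => fst (U s I1 j) - fst (UF s I1 j)) (fun s => snd (U s I1 j) - snd (UF s I1 j))
    (fun s => fst (U s I2 j) - fst (UF s I2 j)) (fun s => snd (U s I2 j) - snd (UF s I2 j))
    (fun s => fst ((- Ci) * mmul2 (Ham b0 b1 b2 b3 s) (U s) I1 j)%C - fst ((- Ci) * mmul2 (Ham b0 b1 b2 b3 s) (UF s) I1 j)%C)
    (fun s => snd ((- Ci) * mmul2 (Ham b0 b1 b2 b3 s) (U s) I1 j)%C - snd ((- Ci) * mmul2 (Ham b0 b1 b2 b3 s) (UF s) I1 j)%C)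
    (fun s => fst ((- Ci) * mmul2 (Ham b0 b1 b2 b3 s) (U s) I2 j)%C - fst ((- Ci) * mmul2 (Ham b0 b1 b2 b3 s) (UF s) I2 j)%C)
    (fun s => snd ((- Ci) * mmul2 (Ham b0 b1 b2 b3 s) (U s) I2 j)%C - snd ((- Ci) * mmul2 (Ham b0 b1 b2 b3 s) (UF s) I2 j)%C)
    ) as E.
  cbv beta in E. rewrite !U0, !IUF in E.
  specialize (E ltac:(apply cwR_minus; auto) ltac:(apply cwR_minus; auto)
    ltac:(apply cwR_minus; auto) ltac:(apply cwR_minus; auto)).
  specialize (E ltac:(intros s Hs; apply dR_minus;
      [apply (proj1 (proj1 (derC_iff _ _ _) (UD s Hs I1 j))) | apply (proj1 (proj1 (derC_iff _ _ _) (DUF s Hs I1 j)))])).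
  specialize (E ltac:(intros s Hs; apply dR_minus;
      [apply (proj2 (proj1 (derC_iff _ _ _) (UD s Hs I1 j))) | apply (proj2 (proj1 (derC_iff _ _ _) (DUF s Hs I1 j)))])).
  specialize (E ltac:(intros s Hs; apply dR_minus;
      [apply (proj1 (proj1 (derC_iff _ _ _) (UD s Hs I2 j))) | apply (proj1 (proj1 (derC_iff _ _ _) (DUF s Hs I2 j)))])).
  specialize (E ltac:(intros s Hs; apply dR_minus;
      [apply (proj2 (proj1 (derC_iff _ _ _) (UD s Hs I2 j))) | apply (proj2 (proj1 (derC_iff _ _ _) (DUF s Hs I2 j)))])).
  specialize (E ltac:(intros s Hs; unfold Ham, mmul2, mscal2, madd2, dot_sigma, Id2, sigma1, sigma2, sigma3;
    destruct j; simpl; ring) t Ht).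
  assert (Z : forall i, fst (U t i j) = fst (UF t i j) /\ snd (U t i j) = snd (UF t i j)).
  { assert (Sq : forall a b c d : R, a*a+b*b+c*c+d*d = 0 -> a = 0 /\ b = 0 /\ c = 0 /\ d = 0)
      by (intros a b c d H; repeat split; nra).
    match type of E with ?L = _ => assert (E' : L = 0) by (rewrite E; ring) end.
    destruct (Sq _ _ _ _ E') as [Z1 [Z2 [Z3 Z4]]].
    intros i'; destruct i'; split; lra. }
  destruct (Z i) as [Z1 Z2]. apply injective_projections; auto.
Qed.
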